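(* Let $(G_N)$ be a family of nonempty graphs. If $\sup_N |V(\operatorname{core}(G_N))|<\infty$, then the set $\{\hat r_\infty(G_N): N\ge 1\}$ is finite.
   Context: All graphs are finite and simple; a graph is nonempty if it has at least one edge. $\operatorname{core}(G)$ is the graph obtained from $G$ by deleting all isolated vertices. $tK_2$ is a matching with $t$ edges. For graphs $F,G,H$, $F\to(G,H)$ means every red--blue coloring of $E(F)$ contains a red copy of $G$ or a blue copy of $H$, and $\hat r(G,H)=\min\{|E(F)|:F\to(G,H)\}$. For a nonempty graph $G$, $\hat r_\infty(G)=\lim_{t\to\infty}\frac{\hat r(tK_2,G)}{t\,|E(G)|}$ (this limit exists). *)

(* Defs.v *)
From Stdlib Require Import Reals ClassicalEpsilon.
From Coquelicot Require Import Coquelicot.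
From mathcomp Require Import all_boot.

Set Implicit Arguments.
Unset Strict Implicit.
Unset Printing Implicit Defensive.

Record graph := Graph {
  gn : nat;
  gadj : rel 'I_gn;
  gsym : symmetric gadj;
  girr : irreflexive gadj }.
Arguments gadj : clear implicits.

Definition edges (G : graph) : {set {set 'I_(gn G)}} :=
  [set e : {set 'I_(gn G)} | [exists u : 'I_(gn G), exists v : 'I_(gn G), gadj G u v && (e == [set u; v])]].

Definition nedges (G : graph) : nat := #|edges G|.

Definition nonempty_graph (G : graph) : Prop := (0 < nedges G)%N.

Definition core_order (G : graph) : nat :=
  #|[set v : 'I_(gn G) | [exists u : 'I_(gn G), gadj G v u]]|.

(* A red/blue colouring of E(F): value of an edge {u,v} is c [set u; v]
   (true = red, false = blue); values on non-edges are irrelevant. *)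
Definition coloring (F : graph) := {set 'I_(gn F)} -> bool.

Definition mono_copy (F : graph) (c : coloring F) (col : bool) (G : graph) : Prop :=
  exists f : 'I_(gn G) -> 'I_(gn F), injective f /\
    forall u v, gadj G u v -> gadj F (f u) (f v) /\ c [set f u; f v] = col.

Definition arrows (F G H : graph) : Prop :=
  forall c : coloring F, mono_copy c true G \/ mono_copy c false H.

Definition size_ramsey_ok (G H : graph) (m : nat) : Prop :=
  exists F : graph, nedges F = m /\ arrows F G H.

(* hat r(G,H) = min { |E(F)| : F -> (G,H) }  (the minimum exists by Ramsey's
   theorem; epsilon is only used to pick it). *)
Definition size_ramsey (G H : graph) : nat :=
  epsilon (inhabits 0%nat)
    (fun m => size_ramsey_ok G H m /\ forall k, size_ramsey_ok G H k -> (m <= k)%N).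

(* The matching tK_2 on 'I_(2t): i ~ j iff i <> j and i/2 = j/2. *)
Definition matching_adj (t : nat) : rel 'I_(t.*2) :=
  fun i j => (i != j) && (i./2 == j./2).

Arguments matching_adj : clear implicits.
Lemma matching_sym t : symmetric (matching_adj t).
Proof. by move=> i j; rewrite /matching_adj eq_sym [j./2 == _]eq_sym. Qed.

Lemma matching_irr t : irreflexive (matching_adj t).
Proof. by move=> i; rewrite /matching_adj eqxx. Qed.

Definition matching (t : nat) : graph :=
  @Graph t.*2 (matching_adj t) (@matching_sym t) (@matching_irr t).

Definition r_infty (G : graph) : R :=
  real (Lim_seq (fun t : nat =>
     (INR (size_ramsey (matching t.+1) G) / (INR t.+1 * INR (nedges G)))%R)).

(* Main.v *)
Require Import Defs.
From Stdlib Require Import Reals ClassicalEpsilon FunctionalExtensionality PropExtensionality.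
From Coquelicot Require Import Coquelicot.
From mathcomp Require Import all_boot zify.

Set Implicit Arguments.
Unset Strict Implicit.
Unset Printing Implicit Defensive.

Definition coreS (G : graph) : {set 'I_(gn G)} := [set v | [exists u, gadj G v u]].

Lemma adj_core (G : graph) u v : gadj G u v -> (u \in coreS G) /\ (v \in coreS G).
Proof.
move=> h; rewrite !inE; split; apply/existsP; [by exists v| exists u; by rewrite gsym].
Qed.

Definition coreiso (G G' : graph) :=
  exists phi : 'I_(gn G) -> 'I_(gn G'),
    [/\ {in coreS G &, injective phi},
        (forall u w, u \in coreS G -> w \in coreS G -> gadj G' (phi u) (phi w) = gadj G u w)
      & (forall v, v \in coreS G' -> exists2 u, u \in coreS G & phi u = v)].

Lemma split_l m k (x : 'I_m) : split (lshift k x) = inl x.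
Proof. exact: (@unsplitK m k (inl x)). Qed.

Section Pad.
Variables (F : graph) (k : nat).
Definition padadj (i j : 'I_(gn F + k)) : bool :=
  match split i, split j with inl a, inl b => gadj F a b | _, _ => false end.
Lemma padsym : symmetric padadj.
Proof. by move=> i j; rewrite /padadj; case: (split i); case: (split j) => // a b; rewrite gsym. Qed.
Lemma padirr : irreflexive padadj.
Proof. by move=> i; rewrite /padadj; case: (split i) => // a; rewrite girr. Qed.
Definition pad := @Graph (gn F + k) padadj padsym padirr.

Lemma padadjE a b : gadj pad (lshift k a) (lshift k b) = gadj F a b.
Proof. by rewrite /= /padadj !split_l. Qed.

Lemma padadj_inv (i j : 'I_(gn F + k)) : gadj pad i j ->
  exists a b, [/\ i = lshift k a, j = lshift k b & gadj F a b].
Proof.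
rewrite /= /padadj; move: (splitK i) (splitK j).
case: (split i) => // a; case: (split j) => // b /= <- <- h.
by exists a, b.
Qed.

Lemma lr_neq (a : 'I_(gn F)) (b : 'I_k) : lshift k a <> rshift (gn F) b.
Proof. move/(congr1 val) => /=. have := ltn_ord a. lia. Qed.

Lemma set2_lift (a b : 'I_(gn F)) : lshift k @: [set a; b] = [set lshift k a; lshift k b].
Proof. by rewrite imsetU1 imset_set1. Qed.

Definition restr (c : coloring pad) : coloring F := fun S => c (lshift k @: S).

Lemma lift_copy (c : coloring pad) col H : mono_copy (restr c) col H -> mono_copy c col H.
Proof.
case=> f [fi fe]; exists (fun u => lshift k (f u)); split.
  by move=> u v /lshift_inj /fi.
move=> u v /fe [h1 h2]; rewrite padadjE; split => //.
by rewrite -set2_lift.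
Qed.

Lemma nedges_pad : nedges pad = nedges F.
Proof.
rewrite /nedges.
have -> : edges pad = (fun A : {set 'I_(gn F)} => lshift k @: A) @: edges F.
  apply/setP => S; apply/idP/idP.
    rewrite inE => /existsP [u /existsP [v /andP [h /eqP ->]]].
    have [a [b [-> -> hab]]] := padadj_inv h.
    apply/imsetP; exists [set a; b]; last by rewrite set2_lift.
    by rewrite inE; apply/existsP; exists a; apply/existsP; exists b; rewrite hab eqxx.
  case/imsetP => T; rewrite inE => /existsP [a /existsP [b /andP [h /eqP ->]]] ->.
  rewrite inE; apply/existsP; exists (lshift k a); apply/existsP; exists (lshift k b).
  by rewrite padadjE h set2_lift eqxx.
by rewrite card_imset //; apply: imset_inj; apply: lshift_inj.
Qed.
End Pad.

Section Transfer.
Variables (G G' : graph) (phi : 'I_(gn G) -> 'I_(gn G')).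
Hypotheses (phii : {in coreS G &, injective phi})
  (phia : forall u w, u \in coreS G -> w \in coreS G -> gadj G' (phi u) (phi w) = gadj G u w)
  (phis : forall v, v \in coreS G' -> exists2 u, u \in coreS G & phi u = v).

Lemma phi_core u : u \in coreS G -> phi u \in coreS G'.
Proof.
move=> hu; have := hu; rewrite inE => /existsP [w hw].
have [_ cw] := adj_core hw.
by have [] := adj_core (etrans (phia hu cw) hw).
Qed.

Lemma transfer1 F H : arrows F H G -> arrows (pad F (gn G')) H G'.
Proof.
move=> hF c; case: (hF (restr c)) => [r|b]; first by left; apply: lift_copy.
right; case: b => f [fi fe].
pose psi v := if [pick u | (u \in coreS G) && (phi u == v)] is Some u
  then lshift (gn G') (f u) else rshift (gn F) v.
have pickS v : v \in coreS G' -> exists u, [/\ u \in coreS G, phi u = v &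
     psi v = lshift (gn G') (f u)].
  move=> hv; rewrite /psi; case: pickP => [u /andP [cu /eqP pu]|none].
    by exists u.
  have [u cu pu] := phis hv; by move: (none u); rewrite cu pu eqxx.
exists psi; split.
  move=> v w; rewrite /psi.
  case: pickP => [u /andP [cu /eqP pu]|_]; case: pickP => [u' /andP [cu' /eqP pu']|_].
  - by move/lshift_inj/fi => e; rewrite -pu -pu' e.
  - by move/lr_neq.
  - by move/esym/lr_neq.
  - by move/rshift_inj.
move=> v w hvw; have [cv cw] := adj_core hvw.
have [u [cu pu ->]] := pickS v cv; have [u' [cu' pu' ->]] := pickS w cw.
have h : gadj G u u' by rewrite -phia // pu pu'.
have [h1 h2] := fe _ _ h.
by rewrite padadjE -set2_lift; split.
Qed.

Lemma transfer2 F H : arrows F H G' -> arrows (pad F (gn G)) H G.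
Proof.
move=> hF c; case: (hF (restr c)) => [r|b]; first by left; apply: lift_copy.
right; case: b => f [fi fe].
pose psi u := if u \in coreS G then lshift (gn G) (f (phi u)) else rshift (gn F) u.
exists psi; split.
  move=> v w; rewrite /psi.
  case cv: (v \in coreS G); case cw: (w \in coreS G).
  - by move/lshift_inj/fi/phii; apply.
  - by move/lr_neq.
  - by move/esym/lr_neq.
  - by move/rshift_inj.
move=> v w hvw; have [cv cw] := adj_core hvw.
rewrite /psi cv cw.
have h : gadj G' (phi v) (phi w) by rewrite phia.
have [h1 h2] := fe _ _ h.
by rewrite padadjE -set2_lift; split.
Qed.

Lemma nedges_iso : nedges G' = nedges G.
Proof.
rewrite /nedges.
have -> : edges G' = (fun A : {set 'I_(gn G)} => phi @: A) @: edges G.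
  apply/setP => S; apply/idP/idP.
    rewrite inE => /existsP [x /existsP [y /andP [h /eqP ->]]].
    have [cx cy] := adj_core h.
    have [u cu pu] := phis cx; have [w cw pw] := phis cy.
    apply/imsetP; exists [set u; w]; last by rewrite imsetU1 imset_set1 pu pw.
    rewrite inE; apply/existsP; exists u; apply/existsP; exists w.
    by rewrite -phia // pu pw h eqxx.
  case/imsetP => T; rewrite inE => /existsP [a /existsP [b /andP [h /eqP ->]]] ->.
  have [ca cb] := adj_core h.
  rewrite inE; apply/existsP; exists (phi a); apply/existsP; exists (phi b).
  by rewrite phia // h imsetU1 imset_set1 eqxx.
rewrite card_in_imset // => A B.
rewrite !inE => /existsP [a /existsP [b /andP [h /eqP ->]]] /existsP [a' /existsP [b' /andP [h' /eqP ->]]].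
have [ca cb] := adj_core h; have [ca' cb'] := adj_core h'.
rewrite !imsetU1 !imset_set1 => e.
have mem : forall x y z, x \in coreS G -> y \in coreS G -> z \in coreS G ->
    phi x \in [set phi y; phi z] -> x \in [set y; z].
  move=> x y z cx cy cz; rewrite !inE => /orP [] /eqP.
    by move/(phii cx cy) ->; rewrite eqxx.
  by move/(phii cx cz) ->; rewrite eqxx orbT.
apply/setP => x; apply/idP/idP => hx.
  have cx : x \in coreS G by case/set2P: hx => ->.
  by apply: mem => //; rewrite -e; by case/set2P: hx => ->; rewrite !inE eqxx ?orbT.
have cx : x \in coreS G by case/set2P: hx => ->.
by apply: mem => //; rewrite e; by case/set2P: hx => ->; rewrite !inE eqxx ?orbT.
Qed.
End Transfer.

Lemma r_infty_iso G G' : coreiso G G' -> r_infty G = r_infty G'.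
Proof.
case=> phi [phii phia phis].
have ok : forall H m, size_ramsey_ok H G m <-> size_ramsey_ok H G' m.
  move=> H m; split.
    case=> F [e a]; exists (pad F (gn G')); rewrite nedges_pad; split => //.
    exact: (transfer1 phia phis).
  case=> F [e a]; exists (pad F (gn G)); rewrite nedges_pad; split => //.
  exact: (transfer2 phii phia).
have E : forall H, size_ramsey H G = size_ramsey H G'.
  move=> H; rewrite /size_ramsey; congr (epsilon _ _).
  apply: functional_extensionality => m; apply: propositional_extensionality.
  split=> [[h1 h2]|[h1 h2]]; split; try (by apply/ok); by move=> k /ok; apply h2.
rewrite /r_infty (nedges_iso phii phia phis).
congr (real (Lim_seq _)); apply: functional_extensionality => t; by rewrite E.
Qed.

Section Mk.
Variables (B : nat) (r : {ffun 'I_B * 'I_B -> bool}).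
Definition mkadj (i j : 'I_B) := (i != j) && (r (i, j) || r (j, i)).
Lemma mksym : symmetric mkadj.
Proof. by move=> i j; rewrite /mkadj eq_sym orbC. Qed.
Lemma mkirr : irreflexive mkadj.
Proof. by move=> i; rewrite /mkadj eqxx. Qed.
Definition mkg := @Graph B mkadj mksym mkirr.
End Mk.

Lemma canon G B : (core_order G <= B)%N ->
  exists r : {ffun 'I_B.+1 * 'I_B.+1 -> bool}, coreiso G (mkg r).
Proof.
move=> hB.
set S := coreS G.
have hS : #|S| = core_order G by [].
pose phi (u : 'I_(gn G)) : 'I_B.+1 := inord (index u (enum S)).
have phiv u : u \in S -> (phi u : nat) = index u (enum S).
  move=> hu; rewrite /phi inordK //.
  have : (index u (enum S) < size (enum S))%N by rewrite index_mem mem_enum.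
  rewrite -cardE hS => h; apply: (leq_trans h); exact: leqW.
have phii : {in S &, injective phi}.
  move=> u w hu hw e.
  have := congr1 (@nat_of_ord _) e; rewrite phiv // phiv // => e'.
  by apply: (@index_inj _ u (enum S) u w); rewrite ?mem_enum.
pose r := [ffun p : 'I_B.+1 * 'I_B.+1 => [exists u, exists v,
     [&& u \in S, v \in S, phi u == p.1, phi v == p.2 & gadj G u v]]].
have rE u w : u \in S -> w \in S -> r (phi u, phi w) = gadj G u w.
  move=> hu hw; rewrite ffunE /=; apply/idP/idP.
    case/existsP => x /existsP [y /and5P [hx hy /eqP ex /eqP ey h]].
    by rewrite -(phii _ _ hx hu ex) -(phii _ _ hy hw ey).
  by move=> h; apply/existsP; exists u; apply/existsP; exists w; rewrite hu hw !eqxx h.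
exists r, phi; split => //.
- move=> u w hu hw; rewrite /= /mkadj !rE //.
  case h: (gadj G u w) => /=; last by rewrite gsym h andbF.
  rewrite andbT; apply/eqP => /(phii _ _ hu hw) e; by rewrite e girr in h.
- move=> v; rewrite /coreS inE => /existsP [j]; rewrite /= /mkadj => /andP [_ /orP []];
    rewrite ffunE => /existsP [x /existsP [y /and5P [hx hy /eqP ex /eqP ey _]]].
    by exists x.
  by exists y.
Qed.

Lemma in_In (T : eqType) (x : T) (s : seq T) : x \in s -> List.In x s.
Proof.
elim: s => //= y s IH; rewrite inE => /orP [/eqP ->|/IH]; [by left | by right].
Qed.

Theorem proposition2p8 (G : nat -> graph) :
  (forall N, (1 <= N)%N -> nonempty_graph (G N)) ->
  (exists B : nat, forall N, (1 <= N)%N -> (core_order (G N) <= B)%N) ->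
  exists s : seq R, forall N, (1 <= N)%N -> List.In (r_infty (G N)) s.
Proof.
move=> _ [B hB].
exists (List.map (fun r : {ffun 'I_B.+1 * 'I_B.+1 -> bool} => r_infty (mkg r))
          (enum {ffun 'I_B.+1 * 'I_B.+1 -> bool})).
move=> N hN; have [r hr] := canon (hB N hN).
rewrite (r_infty_iso hr); apply: List.in_map; apply: in_In; by rewrite mem_enum.
Qed.
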